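(* Let $k\in\mathbb{N}$ and let $p_1,\dots,p_k$ be squarefree positive integers such that $K=\mathbb{Q}(\sqrt{p_1},\dots,\sqrt{p_k})$ has degree $2^k$ over $\mathbb{Q}$. Suppose that $\alpha=\sum_{I\subset\{1,\dots,k\}}a_I\sqrt{p_I}$ (with $a_I\in\mathbb{Q}$) is a totally positive element of the ring of integers $\mathcal{O}_K$. If $a_I\neq 0$ for some $I$, then $\mathrm{Tr}_{K/\mathbb{Q}}(\alpha)>\sqrt{p_I}$.
   Context: For $I\subset\{1,\dots,k\}$, $p_I$ denotes the squarefree part of $\prod_{i\in I}p_i$, i.e. $p_I=\frac{1}{\ell^2}\prod_{i\in I}p_i$ where $\ell$ is the largest integer for which this is an integer (so $p_\emptyset=1$); the elements $\sqrt{p_I}$ form a $\mathbb{Q}$-basis of $K$. An element of $K$ is totally positive if all its images under the real embeddings of $K$ are positive. *)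

(* Defs.v *)
From mathcomp Require Import all_boot all_order all_algebra all_field.
Set Implicit Arguments. Unset Strict Implicit. Unset Printing Implicit Defensive.
Import Order.TTheory GRing.Theory Num.Theory.
Local Open Scope ring_scope.

Definition squarefree (n : nat) : Prop :=
  forall d : nat, (1 < d)%N -> ~~ (d * d %| n)%N.

Definition sq_div (n : nat) : nat := \max_(l < n.+1 | (l * l %| n)%N) l.
Definition sqfree_part (n : nat) : nat := (n %/ (sq_div n * sq_div n))%N.

Definition pI (k : nat) (p : 'I_k -> nat) (I : {set 'I_k}) : nat :=
  sqfree_part (\prod_(i in I) p i)%N.

Definition sqrt_pI (k : nat) (p : 'I_k -> nat) (I : {set 'I_k}) : algC :=
  sqrtC ((pI p I)%:R).

(* K = Q(sqrt p_1, ..., sqrt p_k) is Q-spanned by the 2^k monomials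
   prod_{i in I} sqrt p_i; [K:Q] = 2^k means these are Q-linearly independent. *)
Definition full_degree (k : nat) (p : 'I_k -> nat) : Prop :=
  forall c : {set 'I_k} -> rat,
    \sum_(I : {set 'I_k}) ratr (c I) * \prod_(i in I) sqrtC ((p i)%:R) = 0 :> algC ->
    forall I, c I = 0.

Definition mq_elt (k : nat) (p : 'I_k -> nat) (a : {set 'I_k} -> rat) : algC :=
  \sum_(I : {set 'I_k}) ratr (a I) * sqrt_pI p I.

(* Totally positive: every embedding of K into C (= restriction of a ring
   endomorphism of the algebraic closure algC) sends alpha to a positive real. *)
Definition totally_positive (x : algC) : Prop :=
  forall s : {rmorphism algC -> algC}, 0 < s x.

(* M is the matrix (in the Q-basis (sqrt p_I)_I of K) of multiplication by x:
   x * sqrt p_J = sum_I M I J sqrt p_I.  Tr_{K/Q}(x) is its trace. *)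
Definition mult_matrix (k : nat) (p : 'I_k -> nat) (x : algC)
    (M : {set 'I_k} -> {set 'I_k} -> rat) : Prop :=
  forall J : {set 'I_k},
    x * sqrt_pI p J = \sum_(I : {set 'I_k}) ratr (M I J) * sqrt_pI p I.

Definition trace_of (k : nat) (M : {set 'I_k} -> {set 'I_k} -> rat) : rat :=
  \sum_(J : {set 'I_k}) M J J.

(* Main.v *)
Require Import Defs.
From mathcomp Require Import all_boot all_order all_algebra all_field.
From HB Require Import structures.
From mathcomp Require Import zify ring.
Set Implicit Arguments. Unset Strict Implicit. Unset Printing Implicit Defensive.
Import Order.TTheory GRing.Theory Num.Theory.
Local Open Scope ring_scope.


Section Tau.
Variables (k : nat) (p : 'I_k -> nat).
Hypothesis hdeg : full_degree p.

Lemma tau_exists (i : 'I_k) :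
  {nu : {rmorphism algC -> algC} | forall j,
     nu (sqrtC (p j)%:R) = (if j == i then -1 else 1) * sqrtC (p j)%:R}.
Proof.
pose s := [seq sqrtC ((p j)%:R) : algC | j <- enum 'I_k].
have [Qs [QsC [s1 Ds1 gen]]] := num_field_exists s.
have sz1 : size s1 = k by rewrite -(size_map QsC) Ds1 size_map size_enum_ord.
pose r (j : 'I_k) := nth 0 s1 j.
have Cr j : QsC (r j) = sqrtC (p j)%:R.
  rewrite /r -(nth_map 0 0) ?sz1 // Ds1 (nth_map j) ?size_enum_ord //.
  by rewrite nth_ord_enum.
have r2 j : r j * r j = (p j)%:R.
  by apply: (fmorph_inj QsC); rewrite rmorphM rmorph_nat Cr -expr2 sqrtCK.
pose mono (J : {set 'I_k}) := \prod_(j in J) r j.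
have Cmono J : QsC (mono J) = \prod_(j in J) sqrtC (p j)%:R.
  by rewrite rmorph_prod; apply: eq_bigr => j _; rewrite Cr.
pose V := (\sum_(J : {set 'I_k} | i \notin J) <[mono J]>)%VS.
have memV (J : {set 'I_k}) : i \notin J -> mono J \in V.
  by move=> hJ; rewrite memvE; by apply: (sumv_sup J).
have monoM (J L : {set 'I_k}) : mono J * mono L =
    (\prod_(j in J :&: L) p j)%N%:R * mono ((J :\: L) :|: (L :\: J)).
  rewrite /mono (big_setID (A:=J) L) (big_setID (A:=L) J) /=.
  rewrite (big_setID (A:=J :\: L :|: L :\: J) (J :\: L)) /=.
  have -> : (J :\: L :|: L :\: J) :&: (J :\: L) = J :\: L.
    by apply/setP => x; rewrite !inE; case: (x \in J); case: (x \in L).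
  have -> : (J :\: L :|: L :\: J) :\: (J :\: L) = L :\: J.
    by apply/setP => x; rewrite !inE; case: (x \in J); case: (x \in L).
  rewrite (setIC L J) natr_prod.
  have -> : \prod_(j in J :&: L) ((p j)%:R : Qs) = \prod_(j in J :&: L) (r j * r j).
    by apply: eq_bigr => j _; rewrite r2.
  rewrite big_split /=.
  set A := \prod_(j in J :&: L) r j; set B := \prod_(j in J :\: L) r j.
  set C := \prod_(j in L :\: J) r j.
  by rewrite !mulrA -(mulrA A B A) (mulrC B A) !mulrA.
have Vmul : (V * V <= V)%VS.
  apply/prodvP => u v /memv_sumP[us hus ->] /memv_sumP[vs hvs ->].
  rewrite mulr_suml; apply: memv_suml => J hJ; rewrite mulr_sumr.
  apply: memv_suml => L hL.
  have /vlineP[a ->] := hus J hJ; have /vlineP[b ->] := hvs L hL.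
  rewrite -scalerAl -scalerAr scalerA monoM; apply: memvZ.
  rewrite mulr_natl; apply: rpredMn; apply: memV.
  by rewrite !inE (negbTE hJ) (negbTE hL) !andbF.
have algV : is_aspace V.
  rewrite /is_aspace Vmul andbT; apply: has_algid1.
  by have := memV set0; rewrite /mono big_set0; apply; rewrite inE.
pose E : {aspace Qs} := ASpace algV.
have riV : r i \notin V.
  apply/negP => /memv_sumP[vs hvs Dri].
  have : forall J : {set 'I_k}, exists c : rat, i \notin J -> vs J = c *: mono J.
    move=> J; case: (boolP (i \in J)) => hJ; first by exists 0.
    by have /vlineP[c ->] := hvs J hJ; exists c.
  case/fin_all_exists => c hc.
  pose c' (J : {set 'I_k}) : rat :=
    if i \in J then (if J == [set i] then -1 else 0) else c J.
  have h1 : \sum_(J : {set 'I_k} | i \in J) ratr (c' J) * \prod_(j in J) sqrtC ((p j)%:R : algC)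
      = - sqrtC (p i)%:R.
    rewrite (bigD1 [set i]) ?set11 //= [X in _ + X]big1 ?addr0.
      by rewrite /c' set11 eqxx rmorphN1 big_set1 mulN1r.
    by move=> J /andP[hJ hJ1]; rewrite /c' hJ (negbTE hJ1) rmorph0 mul0r.
  have h2 : \sum_(J : {set 'I_k} | i \notin J) ratr (c' J) * \prod_(j in J) sqrtC ((p j)%:R : algC)
      = sqrtC (p i)%:R.
    rewrite -Cr Dri rmorph_sum; apply: eq_bigr => J hJ.
    by rewrite hc // rmorphZ_num Cmono /c' (negbTE hJ).
  have hsum : \sum_(J : {set 'I_k}) ratr (c' J) * \prod_(j in J) sqrtC ((p j)%:R : algC) = 0.
    by rewrite (bigID (fun J : {set 'I_k} => i \in J)) /= h1 h2 addNr.
  have := hdeg hsum [set i]; rewrite /c' set11 eqxx => /eqP.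
  by rewrite oppr_eq0 oner_eq0.
pose P : {poly Qs} := 'X^2 - ((p i)%:R)%:P.
have PE : P \is a polyOver E by rewrite rpredB ?rpredX ?polyOverX ?polyOverC ?rpred_nat.
have Pri : root P (r i) by rewrite /root !hornerE expr2 r2 subrr.
have m_dvd : minPoly E (r i) %| P := minPoly_dvdp PE Pri.
have szP : size P = 3%N by rewrite size_XnsubC.
have P0 : P != 0 by rewrite -size_poly_gt0 szP.
have szm : size (minPoly E (r i)) = 3%N.
  have h1 := dvdp_leq P0 m_dvd; rewrite szP in h1.
  have h2 : (1 < size (minPoly E (r i)))%N.
    exact: root_size_gt1 (monic_neq0 (monic_minPoly _ _)) (root_minPoly _ _).
  have h3 : size (minPoly E (r i)) != 2%N.
    by rewrite size_minPoly eqSS adjoin_deg_eq1.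
  by move: h1 h2 h3; case: (size _) => [|[|[|[|]]]].
have Dm : minPoly E (r i) = P.
  apply/eqP; rewrite -eqp_monic ?monic_minPoly ?monicXnsubC //.
  by rewrite -dvdp_size_eqp // szm szP.
have froot : root (map_poly \1%VF (minPoly E (r i))) (- r i).
  by rewrite lfun1_poly Dm /root !hornerE sqrrN expr2 r2 subrr.
pose f := kHomExtend E \1%VF (r i) (- r i).
have hom : kHom 1 <<E; r i>> f := kHomExtendP (sub1v E) (kHom1 1 E) froot.
have full : (fullv <= <<E; r i>>)%VS.
  rewrite -gen; apply/(Fadjoin_seqP (E := <<E; r i>>%AS)); split; first exact: sub1v.
  move=> x /(nthP 0)[j hj <-]; rewrite sz1 in hj.
  have -> : nth 0 s1 j = r (Ordinal hj) by [].
  case: (eqVneq (Ordinal hj) i) => [-> | hne]; first exact: memv_adjoin.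
  apply: subvP_adjoin; have := memV [set Ordinal hj]; rewrite /mono big_set1.
  by apply; rewrite in_set1 eq_sym.
have hom' : kHom 1 fullv f := kHomSr full hom.
have /kHom_monoid_morphism mM := hom'.
pose phi : {rmorphism Qs -> Qs} :=
  HB.pack (fun_of_lfun f) (GRing.isMonoidMorphism.Build _ _ _ mM).
have [nu Dnu] := extend_algC_subfield_aut QsC phi.
exists nu => j; rewrite -Cr -Dnu /=.
case: eqP => [-> | /eqP hne].
  by rewrite (kHomExtend_val (kHom1 1 E)) // rmorphN mulN1r.
rewrite kHomExtend_id ?id_lfunE ?mul1r //.
by have := memV [set j]; rewrite /mono big_set1; apply; rewrite in_set1 eq_sym.
Qed.

End Tau.

Section Sigma.
Variables (k : nat) (p : 'I_k -> nat).
Hypothesis hdeg : full_degree p.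

Lemma sigma_seq (s : seq 'I_k) : uniq s ->
  {nu : {rmorphism algC -> algC} | forall j,
     nu (sqrtC (p j)%:R) = (if j \in s then -1 else 1) * sqrtC (p j)%:R}.
Proof.
elim: s => [|i s IH] /=.
  by move=> _; exists (idfun : {rmorphism algC -> algC}) => j; rewrite mul1r.
case/andP => his hu; have [nu Hnu] := IH hu; have [t Ht] := tau_exists hdeg i.
exists (t \o nu) => j /=; rewrite Hnu rmorphM Ht in_cons.
case: eqP => [-> | _] /=; first by rewrite (negbTE his) rmorph1 mul1r.
by case: (j \in s); rewrite ?rmorphN1 ?rmorph1 mul1r.
Qed.

Lemma sigma_exists (S : {set 'I_k}) :
  {nu : {rmorphism algC -> algC} | forall j,
     nu (sqrtC (p j)%:R) = (if j \in S then -1 else 1) * sqrtC (p j)%:R}.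
Proof.
have [nu Hnu] := sigma_seq (enum_uniq (mem S)).
by exists nu => j; rewrite Hnu mem_enum.
Qed.
End Sigma.


Section Chi.
Variable k : nat.
Implicit Types (S J L I : {set 'I_k}).

Definition esg S (j : 'I_k) : algC := if j \in S then -1 else 1.
Definition chi S J : algC := \prod_(j in J) esg S j.

Lemma esg2 S j : esg S j * esg S j = 1.
Proof. by rewrite /esg; case: ifP; rewrite ?mulrNN mulr1. Qed.

Lemma chi2 S J : chi S J * chi S J = 1.
Proof. by rewrite /chi -big_split /= big1 // => j _; exact: esg2. Qed.

Lemma chi_pm S J : chi S J = 1 \/ chi S J = -1.
Proof.
rewrite /chi; apply: (big_ind (fun x : algC => x = 1 \/ x = -1)); first by left.
  by move=> x y [->|->] [->|->]; rewrite ?mulr1 ?mul1r ?mulN1r ?opprK; auto.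
by move=> j _; rewrite /esg; case: ifP; auto.
Qed.

Lemma chi_Aint S J : chi S J \in Aint.
Proof. by case: (chi_pm S J) => ->; rewrite ?rpredN rpred1. Qed.

Lemma chi_set0 J : chi set0 J = 1.
Proof. by rewrite /chi big1 // => j _; rewrite /esg inE. Qed.

Lemma chi_set1 j I : j \in I -> chi [set j] I = -1.
Proof.
move=> hj; rewrite /chi (bigD1 j) //= big1 => [|i /andP[_ hij]].
  by rewrite /esg in_set1 eqxx mulr1.
by rewrite /esg in_set1 (negbTE hij).
Qed.

Definition flip (j : 'I_k) S := if j \in S then S :\ j else j |: S.

Lemma flipK j : involutive (flip j).
Proof.
move=> S; rewrite /flip; case: (boolP (j \in S)) => hS.
  by rewrite setD11 setD1K.
by rewrite setU11 setU1K.
Qed.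

Lemma esg_flip j S i : esg (flip j S) i = (if i == j then -1 else 1) * esg S i.
Proof.
rewrite /esg /flip; case hS: (j \in S); rewrite !inE;
  case: (eqVneq i j) => [->|_] /=; rewrite ?hS ?mulN1r ?mul1r ?opprK //.
Qed.

Lemma chi_flip j S J : chi (flip j S) J = (if j \in J then -1 else 1) * chi S J.
Proof.
rewrite /chi; under eq_bigr do rewrite esg_flip; rewrite big_split /=; congr (_ * _).
case: (boolP (j \in J)) => h.
  by rewrite (bigD1 j) //= eqxx big1 ?mulr1 // => i /andP[_ /negbTE ->].
by apply: big1 => i hi; case: eqP => // e; rewrite -e hi in h.
Qed.

Lemma orth J L :
  \sum_S chi S J * chi S L = (J == L)%:R * #|{set 'I_k}|%:R.
Proof.
case: eqP => [<- | hne].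
  by under eq_bigr do rewrite chi2; rewrite sumr_const mul1r.
case/boolP: [exists j, (j \in J) != (j \in L)] => [/existsP[j hj] | /existsPn hall];
  last first.
  by exfalso; apply: hne; apply/setP => j; apply/eqP; move: (hall j); rewrite negbK.
set X := \sum_S _.
have hX : X = - X.
  rewrite /X {1}(reindex_inj (inv_inj (flipK j))) /= -sumrN; apply: eq_bigr => S _.
  rewrite !chi_flip; move: hj; case: (j \in J); case: (j \in L) => //= _;
    by rewrite ?mulN1r ?mul1r ?mulrN ?mulNr ?opprK.
move/eqP: hX; rewrite -subr_eq0 opprK -mulr2n mulrn_eq0 /= => /eqP ->.
by rewrite mul0r.
Qed.

Lemma orth_sum (g : {set 'I_k} -> algC) J :
  \sum_S chi S J * (\sum_L g L * chi S L) = g J * #|{set 'I_k}|%:R.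
Proof.
under eq_bigr do rewrite mulr_sumr; rewrite exchange_big /= (bigD1 J) //=.
rewrite [X in _ + X]big1 ?addr0.
  by under eq_bigr do rewrite mulrCA; rewrite -mulr_sumr orth eqxx mul1r.
move=> L hL; have hL' : (J == L) = false by rewrite eq_sym (negbTE hL).
by under eq_bigr do rewrite mulrCA; rewrite -mulr_sumr orth hL' mul0r mulr0.
Qed.

End Chi.


Lemma sq_div_ub n (l : nat) : (l <= n)%N -> (l * l %| n)%N -> (l <= sq_div n)%N.
Proof.
move=> hl hd; have hl' : (l < n.+1)%N by rewrite ltnS.
exact: (@leq_bigmax_cond _ (fun i : 'I_n.+1 => (i * i %| n)%N)
          (fun i : 'I_n.+1 => (i : nat)) (Ordinal hl') hd).
Qed.

Lemma sq_div_facts n : (0 < n)%N ->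
  [/\ (0 < sq_div n)%N, (sq_div n * sq_div n %| n)%N
    & squarefree (n %/ (sq_div n * sq_div n))].
Proof.
move=> n0.
have ge1 : (1 <= sq_div n)%N by apply: sq_div_ub => //; rewrite dvd1n.
have dv : (sq_div n * sq_div n %| n)%N.
  have : (sq_div n * sq_div n %| n)%N || (sq_div n == 0)%N.
    rewrite /sq_div; apply: (big_ind (fun x => (x * x %| n)%N || (x == 0)%N)).
    - by rewrite eqxx orbT.
    - by move=> x y hx hy; rewrite /maxn; case: ifP.
    - by move=> i ->.
  by case/orP => // /eqP h; rewrite h in ge1.
split => // d d1; apply/negP => hd.
have ge1' := ge1; move: ge1 dv hd; set l := sq_div n => ge1 dv hd.
have hdl : ((d * l) * (d * l) %| n)%N.
  by rewrite -(divnK dv) mulnACA; apply: dvdn_mul => //.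
have hle : (d * l <= n)%N.
  apply: leq_trans (dvdn_leq n0 hdl); rewrite leq_pmulr // muln_gt0; lia.
have := sq_div_ub hle hdl.
rewrite -/l; nia.
Qed.

Lemma prod_sqrt k (p : 'I_k -> nat) (hp : forall i, (0 < p i)%N) (I : {set 'I_k}) :
  \prod_(i in I) sqrtC ((p i)%:R : algC)
    = (sq_div (\prod_(i in I) p i))%:R * sqrt_pI p I.
Proof.
set n := (\prod_(i in I) p i)%N.
have n0 : (0 < n)%N by rewrite prodn_gt0.
have [l0 dv _] := sq_div_facts n0.
have L2 : (\prod_(i in I) sqrtC ((p i)%:R : algC)) ^+ 2 = n%:R.
  rewrite expr2 -big_split /= natr_prod; apply: eq_bigr => i _.
  by rewrite -expr2 sqrtCK.
have R2 : ((sq_div n)%:R * sqrt_pI p I) ^+ 2 = n%:R :> algC.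
  rewrite exprMn sqrtCK /pI /sqfree_part -/n expr2 -!natrM.
  by rewrite mulnC divnK.
apply/eqP; rewrite -(@eqrXn2 _ 2) // ?L2 ?R2 //.
  by apply: prodr_ge0 => i _; rewrite sqrtC_ge0 ler0n.
by rewrite mulr_ge0 ?ler0n // sqrtC_ge0 ler0n.
Qed.

Lemma pI_gt0 k (p : 'I_k -> nat) (hp : forall i, (0 < p i)%N) (I : {set 'I_k}) :
  (0 < pI p I)%N.
Proof.
have n0 : (0 < \prod_(i in I) p i)%N by rewrite prodn_gt0.
have [l0 dv _] := sq_div_facts n0.
rewrite /pI /sqfree_part divn_gt0 ?muln_gt0 ?l0 //; exact: dvdn_leq.
Qed.

Lemma pI_sqf k (p : 'I_k -> nat) (hp : forall i, (0 < p i)%N) (I : {set 'I_k}) :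
  squarefree (pI p I).
Proof.
have n0 : (0 < \prod_(i in I) p i)%N by rewrite prodn_gt0.
by have [] := sq_div_facts n0.
Qed.

Lemma int_of_sq (y : algC) (n : nat) : y \in Crat -> (0 < n)%N -> squarefree n ->
  y ^+ 2 * n%:R \in Num.int -> y \in Num.int.
Proof.
move=> /CratP[q ->] n0 sqf /intrP[z hz].
have d0 := denq_gt0 q.
have hmz : (numq q ^+ 2 * n%:Z = z * denq q ^+ 2)%R.
  apply: (@intr_inj algC); rewrite !rmorphM /= -hz /ratr.
  have D0 : ((denq q)%:~R : algC) != 0 by rewrite intr_eq0 gt_eqF.
  rewrite pmulrn; field.
  exact: D0.
have hdvd : (`|denq q| * `|denq q| %| `|numq q| * `|numq q| * n)%N.
  have := congr1 (fun x : int => `|x|%N) hmz => /=.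
  rewrite !abszM /= => ->; exact: dvdn_mull.
have cop : coprime (`|denq q| * `|denq q|) (`|numq q| * `|numq q|).
  by rewrite coprimeMl !coprimeMr coprime_sym coprime_num_den.
rewrite Gauss_dvdr // in hdvd.
have d1 : `|denq q|%N = 1%N.
  case: (ltngtP `|denq q|%N 1) => // h.
  - by move: h; rewrite ltnS leqn0 absz_eq0 => /eqP h0; rewrite h0 in d0.
  - by move: (sqf _ h); rewrite hdvd.
have hq : denq q = 1 by move: d0 d1; case: (denq q) => // m _ /= ->.
by rewrite /ratr hq divr1 intr_int.
Qed.

Lemma sqd_neq0 k (p : 'I_k -> nat) (hp : forall i, (0 < p i)%N) (I : {set 'I_k}) :
  ((sq_div (\prod_(i in I) p i))%:R : algC) != 0.
Proof.
have n0 : (0 < \prod_(i in I) p i)%N by rewrite prodn_gt0.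
have [l0 _ _] := sq_div_facts n0.
by rewrite pnatr_eq0 -lt0n.
Qed.

Lemma sqfree_part1 : sqfree_part 1 = 1%N.
Proof.
have [_ dv _] := sq_div_facts (ltn0Sn 0).
by rewrite /sqfree_part; move: dv; rewrite dvdn1 => /eqP ->.
Qed.

Lemma sum_ge_term (T : finType) (f : T -> algC) (i0 : T) :
  (forall i, 0 <= f i) -> f i0 <= \sum_i f i.
Proof. by move=> h; rewrite (bigD1 i0) //= lerDl sumr_ge0. Qed.


Theorem lemma5 (k : nat) (hk : (0 < k)%N) (p : 'I_k -> nat)
    (hp_pos : forall i, (0 < p i)%N) (hp_sqf : forall i, squarefree (p i))
    (hdeg : full_degree p)
    (a : {set 'I_k} -> rat)
    (hint : mq_elt p a \in Aint)
    (hpos : totally_positive (mq_elt p a))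
    (I : {set 'I_k}) (haI : a I != 0)
    (M : {set 'I_k} -> {set 'I_k} -> rat)
    (hM : mult_matrix p (mq_elt p a) M) :
  sqrt_pI p I < ratr (trace_of M).
Proof.
pose sig S := sval (sigma_exists hdeg S).
have sigP S j : sig S (sqrtC (p j)%:R) = esg S j * sqrtC (p j)%:R.
  exact: (svalP (sigma_exists hdeg S) j).
have sigI S J : sig S (sqrt_pI p J) = chi S J * sqrt_pI p J.
  have h := prod_sqrt hp_pos J.
  have := congr1 (sig S) h; rewrite rmorph_prod rmorphM rmorph_nat.
  under eq_bigr do rewrite sigP; rewrite big_split /= -/(chi S J) h mulrCA.
  by move/(mulfI (sqd_neq0 hp_pos J)) => ->.
set alpha := mq_elt p a.
have sig_alpha S :
    sig S alpha = \sum_L (ratr (a L) * sqrt_pI p L) * chi S L.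
  rewrite /alpha /mq_elt rmorph_sum; apply: eq_bigr => L _.
  by rewrite rmorphM fmorph_rat sigI; ring.
set N : algC := #|{set 'I_k}|%:R.
have N0 : N != 0.
  by rewrite pnatr_eq0 -lt0n; apply/card_gt0P; exists set0.
set T := \sum_S sig S alpha.
have coef J : \sum_S chi S J * sig S alpha = ratr (a J) * sqrt_pI p J * N.
  under eq_bigr do rewrite sig_alpha.
  exact: (orth_sum (fun L => ratr (a L) * sqrt_pI p L) J).
have sqrt0 J : sqrt_pI p J != 0.
  by rewrite /sqrt_pI sqrtC_eq0 pnatr_eq0 -lt0n pI_gt0.
have trT : ratr (trace_of M) = T.
  have hJ J : T = ratr (M J J) * N.
    have := congr1 (fun x => \sum_S chi S J * sig S x) (hM J) => /=.
    have e S : chi S J * sig S (alpha * sqrt_pI p J) = sqrt_pI p J * sig S alpha.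
      rewrite rmorphM sigI.
      transitivity ((chi S J * chi S J) * (sqrt_pI p J * sig S alpha)); first ring.
      by rewrite chi2 mul1r.
    rewrite (eq_bigr _ (fun S _ => e S)) -mulr_sumr -/T.
    have e2 S : chi S J * sig S (\sum_L ratr (M L J) * sqrt_pI p L) =
        chi S J * \sum_L (ratr (M L J) * sqrt_pI p L) * chi S L.
      rewrite rmorph_sum; congr (_ * _); apply: eq_bigr => L _.
      by rewrite rmorphM fmorph_rat sigI; ring.
    rewrite (eq_bigr _ (fun S _ => e2 S)).
    rewrite (orth_sum (fun L => ratr (M L J) * sqrt_pI p L) J) => h.
    apply: (mulfI (sqrt0 J)); rewrite h; ring.
  have hJ' J : ratr (M J J) = T / N by rewrite (hJ J) mulfK.
  rewrite /trace_of rmorph_sum (eq_bigr _ (fun J _ => hJ' J)) sumr_const.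
  by rewrite -mulr_natr divfK.
have pos S : 0 < sig S alpha := hpos (sig S).
have aint S : sig S alpha \in Aint by rewrite Aint_aut.
have T0 : 0 < T.
  exact: lt_le_trans (pos set0) (@sum_ge_term _ _ set0 (fun S => ltW (pos S))).
have key : forall I0, I0 != set0 -> a I0 != 0 ->
    1 <= sqrt_pI p I0 /\ sqrt_pI p I0 < T.
  move=> I0 In aI.
  set q : rat := a I0 * #|{set 'I_k}|%:R.
  have yq : ratr q = ratr (a I0) * N by rewrite rmorphM rmorph_nat.
  set x := \sum_S chi S I0 * sig S alpha.
  have xA : x \in Aint by apply: rpred_sum => S _; rewrite rpredM ?chi_Aint.
  have xy : x = ratr q * sqrt_pI p I0 by rewrite /x coef yq; ring.
  have yint : (ratr q : algC) \in Num.int.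
    apply: (int_of_sq (Crat_rat q) (pI_gt0 hp_pos I0) (pI_sqf hp_pos I0)).
    have -> : ratr q ^+ 2 * (pI p I0)%:R = x ^+ 2.
      by rewrite xy [RHS]exprMn /sqrt_pI sqrtCK.
    apply: Cint_rat_Aint; last by rewrite rpredX.
    by rewrite xy exprMn /sqrt_pI sqrtCK rpredM ?rpredX ?Crat_rat ?rpred_nat.
  have y0 : (ratr q : algC) != 0.
    rewrite fmorph_eq0 mulf_neq0 // pnatr_eq0 -lt0n.
    by apply/card_gt0P; exists set0.
  have y1 := norm_intr_ge1 yint y0.
  have s0 : 0 <= sqrt_pI p I0 by rewrite sqrtC_ge0 ler0n.
  have s1 : 1 <= sqrt_pI p I0.
    rewrite /sqrt_pI -{1}sqrtC1 ler_sqrtC ?nnegrE ?ler01 ?ler0n //.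
    by rewrite ler1n pI_gt0.
  split => //.
  have [sg [sgy sgpm]] : exists sg : algC,
      sg * ratr q = `|ratr q| /\ (sg = 1 \/ sg = -1).
    case: (boolP (0 <= q)) => hq; [exists 1 | exists (-1)]; split; auto.
      by rewrite mul1r ger0_norm // ler0q.
    by rewrite mulN1r ltr0_norm // ltrq0 ltNge.
  have term S : 0 <= sig S alpha * (1 - sg * chi S I0).
    apply: mulr_ge0; first exact: ltW.
    case: sgpm => ->; case: (chi_pm S I0) => ->;
      rewrite ?mulr1 ?mul1r ?mulN1r ?opprK ?subrr ?lexx //;
      by apply: addr_ge0; rewrite ?ler01.
  have [j hj] : exists j, j \in I0 by apply/set0Pn.
  have [S0 hS0] : exists S0, sg * chi S0 I0 = -1.
    case: sgpm => ->; [exists [set j] | exists set0];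
      by rewrite ?chi_set1 ?chi_set0 ?mulr1 ?mul1r.
  have termS0 : 0 < sig S0 alpha * (1 - sg * chi S0 I0).
    by rewrite hS0 opprK; apply: mulr_gt0; [exact: pos | apply: addr_gt0; rewrite ?ltr01].
  have D : T - `|ratr q| * sqrt_pI p I0 =
      \sum_S sig S alpha * (1 - sg * chi S I0).
    rewrite -sgy -mulrA -xy /x /T mulr_sumr -sumrB; apply: eq_bigr => S _; ring.
  have Dpos : 0 < T - `|ratr q| * sqrt_pI p I0.
    by rewrite D; apply: lt_le_trans termS0 (@sum_ge_term _ _ S0 term).
  rewrite subr_gt0 in Dpos.
  by apply: le_lt_trans _ Dpos; rewrite ler_peMl.
case: (eqVneq I set0) => [I0 | In]; last first.
  by rewrite trT; case: (key I In haI).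
rewrite trT I0 /sqrt_pI /pI big_set0 sqfree_part1 sqrtC1.
pose j : 'I_k := Ordinal hk.
have j0 : [set j] != set0 by apply/set0Pn; exists j; rewrite set11.
case: (eqVneq (a [set j]) 0) => aj; last first.
  by have [h1 h2] := key [set j] j0 aj; apply: le_lt_trans h1 h2.
set z := \sum_(S : {set 'I_k}) (if j \in S then 0 else 1) * sig S alpha.
have zA : z \in Aint.
  apply: rpred_sum => S _; rewrite rpredM //.
  by case: ifP => _; rewrite ?rpred0 ?rpred1.
have z2 : z *+ 2 = T.
  have hx : \sum_S chi S [set j] * sig S alpha = 0.
    by rewrite coef aj rmorph0 !mul0r.
  have : z *+ 2 = T + \sum_S chi S [set j] * sig S alpha.
    rewrite /z /T -sumrMnl -big_split; apply: eq_bigr => S _ /=.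
    by rewrite /chi big_set1 /esg; case: (j \in S); ring.
  by rewrite hx addr0.
have zQ : z \in Crat.
  have -> : z = ratr (trace_of M) / 2%:R.
    by rewrite trT -z2 -mulr_natr mulfK // pnatr_eq0.
  by rewrite rpred_div ?Crat_rat ?rpred_nat.
have zint : z \in Num.int := Cint_rat_Aint zQ zA.
have z0 : 0 < z by rewrite -(pmulrn_lgt0 _ (isT : (0 < 2)%N)) z2.
have z1 : 1 <= z.
  by have := norm_intr_ge1 zint (negbT (gt_eqF z0)); rewrite ger0_norm // ltW.
by apply: le_lt_trans z1 _; rewrite -z2 mulr2n ltrDl.
Qed.
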